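(* Let $L,p,q$ be positive integers with $p\ge 2$ and $p+q\le L$. For any $\varepsilon>0$ there exists a $(p,q)$-cliff sequence $\mathbf{l}\in\mathbb{R}^L$ (of some norm $C>0$) such that $\mathrm{softmax}(\mathbf{l})_i\le\varepsilon$ for every $i\in[1,p-1]\cup[p+q+1,L]$.
   Context: A sequence $\mathbf{l}=(\mathbf{l}_1,\dots,\mathbf{l}_L)\in\mathbb{R}^L$ is called a $(p,q)$-cliff sequence if: (1) (increasing segment) $\mathbf{l}_{i+1}>\mathbf{l}_i$ for all $i<p$; (2) (plateau) $\frac{\mathbf{l}_{p-1}+\mathbf{l}_p}{2}\le\mathbf{l}_j\le\mathbf{l}_p$ for all $j\in\{p+1,\dots,p+q\}$; (3) (descending segment) $\mathbf{l}_i<\mathbf{l}_1$ for all $p+q<i\le L$. Here $\mathrm{softmax}(\mathbf{l})_i=e^{\mathbf{l}_i}/\sum_{k=1}^L e^{\mathbf{l}_k}$. *)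

(* Defs.v *)
(* sequences l in R^L represented as functions nat -> R, indexed 1..L. *)
From Stdlib Require Import Reals.
Open Scope R_scope.

Fixpoint sum1 (n : nat) (f : nat -> R) : R :=
  match n with
  | O => 0
  | S m => sum1 m f + f n
  end.

Definition softmax (L : nat) (l : nat -> R) (i : nat) : R :=
  exp (l i) / sum1 L (fun k => exp (l k)).

Definition norm2 (L : nat) (l : nat -> R) : R :=
  sqrt (sum1 L (fun k => l k * l k)).

Definition cliff_seq (L p q : nat) (l : nat -> R) : Prop :=
  (forall i : nat, (1 <= i < p)%nat -> l i < l (S i)) /\
  (forall j : nat, (p + 1 <= j <= p + q)%nat ->
      (l (p - 1)%nat + l p) / 2 <= l j /\ l j <= l p) /\
  (forall i : nat, (p + q < i <= L)%nat -> l i < l 1%nat).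

(* Main.v *)
Require Import Defs.
From Stdlib Require Import Reals Lra Lia Arith.
Open Scope R_scope.

Lemma sum1_nonneg (f : nat -> R) (n : nat) :
  (forall k, 0 <= f k) -> 0 <= sum1 n f.
Proof.
  intros H; induction n as [|n IH]; simpl; [lra|]. specialize (H (S n)); lra.
Qed.

Lemma sum1_ge (f : nat -> R) (n k : nat) :
  (forall k, 0 <= f k) -> (1 <= k <= n)%nat -> f k <= sum1 n f.
Proof.
  intros H; induction n as [|n IH]; intros Hk; [lia|]. simpl.
  destruct (Nat.eq_dec k (S n)) as [->|Hne].
  - pose proof (sum1_nonneg f n H); lra.
  - pose proof (IH ltac:(lia)). specialize (H (S n)); lra.
Qed.

Theorem lemmaE5 (L p q : nat) (hL : (0 < L)%nat) (hq : (0 < q)%nat)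
  (hp : (2 <= p)%nat) (hpq : (p + q <= L)%nat) (eps : R) (heps : 0 < eps) :
  exists l : nat -> R,
    cliff_seq L p q l /\
    (exists C : R, 0 < C /\ norm2 L l = C) /\
    (forall i : nat, ((1 <= i <= p - 1)%nat \/ (p + q + 1 <= i <= L)%nat) ->
       softmax L l i <= eps).
Proof.
  set (A := INR p + Rabs (ln eps) + 1).
  assert (HA1 : INR p + 1 <= A) by (unfold A; pose proof (Rabs_pos (ln eps)); lra).
  assert (HA2 : INR p <= ln eps + A).
  { unfold A. pose proof (Rle_abs (- ln eps)). rewrite Rabs_Ropp in H. lra. }
  set (l := fun i : nat => if (i <? p)%nat then INR i
                          else if (i <=? p + q)%nat then A else 0).
  assert (Hlow : forall i, (i < p)%nat -> l i = INR i).
  { intros i Hi; unfold l. apply Nat.ltb_lt in Hi; rewrite Hi; auto. }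
  assert (Hmid : forall i, (p <= i <= p + q)%nat -> l i = A).
  { intros i Hi; unfold l. destruct (Nat.ltb_spec i p); [lia|].
    destruct (Nat.leb_spec i (p+q)); [auto|lia]. }
  assert (Hhigh : forall i, (p + q < i)%nat -> l i = 0).
  { intros i Hi; unfold l. destruct (Nat.ltb_spec i p); [lia|].
    destruct (Nat.leb_spec i (p+q)); [lia|auto]. }
  assert (HINRp : forall i, (i <= p)%nat -> INR i <= INR p) by (intros; apply le_INR; lia).
  assert (Hexp0 : forall k, 0 <= exp (l k)) by (intros; left; apply exp_pos).
  exists l. split; [|split].
  - split; [|split].
    + intros i Hi. rewrite Hlow by lia.
      destruct (Nat.eq_dec (S i) p) as [E|E].
      * rewrite Hmid by lia. pose proof (HINRp i ltac:(lia)). lra.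
      * rewrite Hlow by lia. rewrite S_INR. lra.
    + intros j Hj. rewrite (Hmid j) by lia. rewrite (Hmid p) by lia.
      rewrite Hlow by lia. pose proof (HINRp (p-1)%nat ltac:(lia)). lra.
    + intros i Hi. rewrite Hhigh by lia. rewrite Hlow by lia. simpl. lra.
  - exists (norm2 L l). split; [|reflexivity]. unfold norm2. apply sqrt_lt_R0.
    assert (H : (fun k => l k * l k) p <= sum1 L (fun k => l k * l k)).
    { apply (sum1_ge (fun k => l k * l k)); [intros; apply Rle_0_sqr| lia]. }
    simpl in H. rewrite Hmid in H by lia. pose proof (pos_INR p). nra.
  - intros i Hi. unfold softmax.
    set (S := sum1 L (fun k => exp (l k))).
    assert (HS : exp A <= S).
    { unfold S. pose proof (sum1_ge (fun k => exp (l k)) L p Hexp0 ltac:(lia)).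
      simpl in H. rewrite Hmid in H by lia. exact H. }
    assert (Hli : l i <= INR p).
    { destruct Hi as [Hi|Hi].
      - rewrite Hlow by lia. apply HINRp; lia.
      - rewrite Hhigh by lia. apply pos_INR. }
    assert (HSpos : 0 < S) by (pose proof (exp_pos A); lra).
    apply (Rmult_le_reg_r S); [exact HSpos|].
    unfold Rdiv. rewrite Rmult_assoc, Rinv_l by lra. rewrite Rmult_1_r.
    assert (exp (l i) <= exp (ln eps + A)).
    { destruct (Rle_lt_or_eq_dec _ _ (Rle_trans _ _ _ Hli HA2)) as [h|h].
      - left; apply exp_increasing; exact h.
      - rewrite h; lra. }
    rewrite exp_plus, exp_ln in H by exact heps.
    pose proof (Rmult_le_compat_l eps _ _ (Rlt_le _ _ heps) HS). lra.
Qed.
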